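(* Let $\Omega$ be a finite-dimensional vector space over a finite field, $n=|\Omega|$, let $G\le\mathrm{AGL}(\Omega)$ be an affine group containing all translations of $\Omega$, and let $K$ be a one-point stabilizer of $G$, $k=|K|$. Suppose that $4(k-1)\,\mathrm{Fix}(K)<n$. Then $b(\mathrm{Inv}(G))\le 2$. In particular, this holds whenever $4k(k-1)f<n$ where $f=\mathrm{fix}(K)$.
   Context: For a permutation $g$, $\mathrm{fix}(g)$ is the number of its fixed points; for a set $K$ of permutations, $\mathrm{fix}(K)=\max\{\mathrm{fix}(g):g\in K\setminus\{1\}\}$ and $\mathrm{Fix}(K)=\sum_{g\in K\setminus\{1\}}\mathrm{fix}(g)$. $\mathrm{Inv}(G)=(\Omega,S)$ where $S$ is the set of orbits of $G$ on $\Omega\times\Omega$; this is a coherent configuration (its relations are unions of elements of $S$, its fibers are sets $\Gamma$ with $\{(\gamma,\gamma):\gamma\in\Gamma\}\in S$). A set $B\subseteq\Omega$ is a base of a coherent configuration $\mathcal X$ if the smallest coherent configuration on $\Omega$ whose relations include those of $\mathcal X$ and in which every $\{\beta\}$, $\beta\in B$, is a fiber has only singleton basic relations; $b(\mathcal X)$ is the minimal size of a base. *)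

(* Defs.v *)
From HB Require Import structures.
From mathcomp Require Import all_boot all_order all_algebra all_fingroup.
Set Implicit Arguments. Unset Strict Implicit. Unset Printing Implicit Defensive.
Import GRing.Theory.

(* A configuration is given by its set S of basic relations. *)
Section CC.
Variable T : finType.

Definition diagT : {set T * T} := [set p | p.1 == p.2].
Definition transp (r : {set T * T}) : {set T * T} := [set p | (p.2, p.1) \in r].

Definition inum (r s : {set T * T}) (a b : T) : nat :=
  #|[set c | ((a, c) \in r) && ((c, b) \in s)]|.

Definition is_cc (S : {set {set T * T}}) : Prop :=
  [/\ partition S [set: T * T],
      (forall r, r \in S -> (r \subset diagT) \/ [disjoint r & diagT]),
      (forall r, r \in S -> transp r \in S) &
      (forall r s t, r \in S -> s \in S -> t \in S ->
         forall p q, p \in t -> q \in t -> inum r s p.1 p.2 = inum r s q.1 q.2)].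

(* every relation (union of basic relations) of X is a relation of Y,
   i.e. every basic relation of X is a union of basic relations of Y *)
Definition cc_extends (Y X : {set {set T * T}}) : Prop :=
  forall s t, s \in X -> t \in Y -> (t \subset s) \/ [disjoint t & s].

Definition singleton_fiber (Y : {set {set T * T}}) (b : T) : Prop :=
  [set (b, b)] \in Y.

Definition cc_closure_with_points (X : {set {set T * T}}) (B : {set T})
    (Y : {set {set T * T}}) : Prop :=
  [/\ is_cc Y, cc_extends Y X, (forall b, b \in B -> singleton_fiber Y b) &
      (forall Z, is_cc Z -> cc_extends Z X ->
         (forall b, b \in B -> singleton_fiber Z b) -> cc_extends Z Y)].

Definition discrete_cc (Y : {set {set T * T}}) : Prop :=
  forall s, s \in Y -> #|s| = 1.

Definition is_base (X : {set {set T * T}}) (B : {set T}) : Prop :=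
  exists Y, cc_closure_with_points X B Y /\ discrete_cc Y.

Definition base_number_le (X : {set {set T * T}}) (m : nat) : Prop :=
  exists B : {set T}, #|B| <= m /\ is_base X B.

Definition orbit2 (G : {set {perm T}}) (p : T * T) : {set T * T} :=
  [set (g p.1, g p.2) | g : {perm T} in G].

Definition Inv (G : {set {perm T}}) : {set {set T * T}} :=
  [set orbit2 G p | p in [set: T * T]].

Definition fixn (g : {perm T}) : nat := #|[set x | g x == x]|.
Definition fixK (K : {set {perm T}}) : nat := \max_(g in K :\ 1%g) fixn g.
Definition FixK (K : {set {perm T}}) : nat := \sum_(g in K :\ 1%g) fixn g.

Definition point_stab (G : {set {perm T}}) (a : T) : {set {perm T}} :=
  [set g in G | g a == a].
End CC.

Local Open Scope ring_scope.
Definition is_affine (F : finFieldType) (m : nat) (g : {perm 'rV[F]_m}) : Prop :=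
  exists (A : 'M[F]_m) (b : 'rV[F]_m),
    A \in unitmx /\ forall x, g x = x *m A + b.

Definition in_AGL (F : finFieldType) (m : nat) (G : {set {perm 'rV[F]_m}}) : Prop :=
  forall g, g \in G -> is_affine g.

Definition contains_translations (F : finFieldType) (m : nat)
    (G : {set {perm 'rV[F]_m}}) : Prop :=
  forall b : 'rV[F]_m, exists2 g, g \in G & forall x, g x = x + b.

(* Main.v *)
Require Import Defs.
From mathcomp Require Import all_boot all_order all_algebra all_fingroup.
Set Implicit Arguments. Unset Strict Implicit. Unset Printing Implicit Defensive.

Lemma cc_first (T : finType) (Z : {set {set T * T}}) u x c y t :
  is_cc Z -> [set (u,u)] \in Z -> t \in Z -> (u,x) \in t -> (c,y) \in t -> c = u.
Proof.
case=> _ _ _ Hi Hu Ht Hux Hcy.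
have := Hi _ _ _ Hu Ht Ht _ _ Hux Hcy => /= E.
have : 0 < inum [set (u, u)] t u x.
  by rewrite /inum card_gt0; apply/set0Pn; exists u; rewrite inE set11 Hux.
rewrite E /inum card_gt0 => /set0Pn [z]; rewrite !inE => /andP[/eqP[-> _] _].
done.
Qed.

Lemma cc_second (T : finType) (Z : {set {set T * T}}) v x c y t :
  is_cc Z -> [set (v,v)] \in Z -> t \in Z -> (x,v) \in t -> (y,c) \in t -> c = v.
Proof.
case=> _ _ _ Hi Hv Ht Hxv Hyc.
have := Hi _ _ _ Ht Hv Ht _ _ Hxv Hyc => /= E.
have : 0 < inum t [set (v, v)] x v.
  by rewrite /inum card_gt0; apply/set0Pn; exists v; rewrite !inE Hxv eqxx.
rewrite E /inum card_gt0 => /set0Pn [z]; rewrite !inE => /andP[_ /eqP[_ ->]].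
done.
Qed.

Lemma cc_blk (T : finType) (Z : {set {set T * T}}) p :
  is_cc Z -> pblock Z p \in Z /\ p \in pblock Z p.
Proof.
case=> /and3P[/eqP Hc _ _] _ _ _.
by rewrite pblock_mem ?mem_pblock Hc inE.
Qed.

Lemma cc_blk_uniq (T : finType) (Z : {set {set T * T}}) p t :
  is_cc Z -> t \in Z -> p \in t -> pblock Z p = t.
Proof. by case=> /and3P[_ Ht _] _ _ _ ? ?; apply: def_pblock. Qed.

Lemma cc_L2 (T : finType) (Z : {set {set T * T}}) u x y :
  is_cc Z -> [set (u,u)] \in Z -> (y,y) \in pblock Z (x,x) ->
  (u,y) \in pblock Z (u,x).
Proof.
move=> HZ Hu Hy.
have [Ht Hux] := cc_blk (u,x) HZ.
have [Hd Hxx] := cc_blk (x,x) HZ.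
have [_ _ Htr Hi] : is_cc Z := HZ.
have := Hi _ _ _ (Htr _ Ht) Ht Hd _ _ Hxx Hy => /= E.
have : 0 < inum (transp (pblock Z (u, x))) (pblock Z (u, x)) x x.
  by rewrite /inum card_gt0; apply/set0Pn; exists u; rewrite !inE /= Hux.
rewrite E /inum card_gt0 => /set0Pn [z]; rewrite !inE /= => /andP[_ Hzy].
by have E' := cc_first HZ Hu Ht Hux Hzy; rewrite E' in Hzy.
Qed.

Lemma cc_L3 (T : finType) (Z : {set {set T * T}}) x :
  is_cc Z -> [set (x,x)] \notin Z -> exists2 y, y != x & (y,y) \in pblock Z (x,x).
Proof.
move=> HZ Hn.
have [Hd Hxx] := cc_blk (x,x) HZ.
have [_ Hdi _ _] : is_cc Z := HZ.
have Hsub : pblock Z (x,x) \subset diagT T.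
  case: (Hdi _ Hd) => // /disjoint_setI0 /setP /(_ (x,x)).
  by rewrite !inE Hxx /= eqxx.
have [/existsP[y /andP[H1 H2]]|Hno] := boolP [exists y, (y != x) && ((y,y) \in pblock Z (x,x))].
  by exists y.
have E : pblock Z (x,x) = [set (x,x)].
  apply/eqP; rewrite eqEsubset sub1set Hxx andbT.
  apply/subsetP => -[a b] Hab.
  have := subsetP Hsub _ Hab; rewrite inE /= => /eqP Eab; subst b.
  rewrite inE; case: (eqVneq a x) => [->//|Hne].
  by move/existsPn: Hno => /(_ a); rewrite Hne Hab.
by move: Hn; rewrite -E Hd.
Qed.

Definition Ydisc (T : finType) : {set {set T * T}} := [set [set p] | p in [set: T * T]].

Lemma Ydisc_cc (T : finType) : is_cc (Ydisc T).
Proof.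
split.
- apply/and3P; split.
  + apply/eqP/setP => p; rewrite inE; apply/bigcupP.
    by exists [set p]; rewrite ?set11 // imset_f ?inE.
  + apply/trivIsetP => _ _ /imsetP[p _ ->] /imsetP[q _ ->] Hne.
    rewrite disjoints1 inE; apply: contraNneq Hne => ->; done.
  + apply/imsetP => -[p _] /setP /(_ p); by rewrite !inE eqxx.
- move=> _ /imsetP[p _ ->]; case Hp: (p \in diagT T).
  + by left; rewrite sub1set.
  + by right; rewrite disjoints1 Hp.
- move=> _ /imsetP[p _ ->]; apply/imsetP; exists (p.2, p.1); rewrite ?inE //.
  apply/setP => q; rewrite !inE; case: p q => a b [c d] /=.
  by rewrite !xpair_eqE andbC.
- move=> r s _ _ _ /imsetP[t _ ->] p q; rewrite !inE => /eqP -> /eqP -> //.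
Qed.

Lemma card_sumb (T : finType) (P : pred T) : #|[set u | P u]| = \sum_u (P u : nat).
Proof.
rewrite -sum1_card big_mkcond /=; apply: eq_bigr => u _; rewrite inE; by case: (P u).
Qed.

Lemma union_bound (T I : finType) (A : {set T}) (J : {set I}) (P : I -> T -> bool) :
  (forall u, u \in A -> exists2 i, i \in J & P i u) ->
  #|A| <= \sum_(i in J) #|[set u | P i u]|.
Proof.
move=> H.
rewrite -sum1_card big_mkcond /=.
have -> : \sum_(i in J) #|[set u | P i u]| = \sum_(i in J) \sum_u (P i u : nat) by apply: eq_bigr => i _; exact: card_sumb.
rewrite exchange_big /=.
apply: leq_sum => u _; case: ifP => // /H [i Hi Hp].
by rewrite (bigD1 i) //= Hp leq_addr.
Qed.
Import GRing.Theory.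
Local Open Scope ring_scope.

Lemma aff_diff (F : finFieldType) (m : nat) (G : {set {perm 'rV[F]_m}}) g :
  in_AGL G -> g \in G -> exists A : 'M[F]_m, forall y z, g y - g z = (y - z) *m A.
Proof.
move=> HA Hg; have [A [b [_ E]]] := HA g Hg.
exists A => y z; rewrite !E mulmxBl; rewrite opprD addrACA subrr addr0 //.
Qed.

Lemma count_fix (F : finFieldType) (m : nat) (G : {set {perm 'rV[F]_m}})
  (alpha c d : 'rV[F]_m) h :
  in_AGL G -> h \in G -> h alpha = alpha ->
  (#|[set u | (h (c - u + alpha) == d - u + alpha)%R]| <= fixn h)%N.
Proof.
move=> HA Hh Hfix.
have [A HdA] := aff_diff HA Hh.
set S := [set u | _].
have [->|[u0 Hu0]] := set_0Vmem S; first by rewrite cards0.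
rewrite /fixn -(card_imset S (addIr (alpha - u0))).
apply: subset_leq_card; apply/subsetP => _ /imsetP[u Hu ->].
rewrite !inE in Hu Hu0 *.
have E1 := HdA (c - u + alpha) (c - u0 + alpha).
rewrite (eqP Hu) (eqP Hu0) in E1.
have Ediff : forall a b e : 'rV[F]_m, (a - b + e) - (a - u0 + e) = u0 - b.
  by move=> a b e; rewrite opprD addrACA subrr addr0 opprB addrC addrA subrK.
rewrite !Ediff in E1.
have E2 := HdA (u + (alpha - u0)) alpha.
have Ee : u + (alpha - u0) - alpha = u - u0.
  by rewrite addrCA [alpha + _]addrC addrK.
rewrite Ee Hfix in E2.
have E3 : (u - u0) *m A = u - u0.
  by rewrite -opprB mulNmx -E1 opprB.
have E2' : h (u + (alpha - u0)) = (u - u0) + alpha.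
  by rewrite -[h _](subrK alpha) E2 E3.
by rewrite E2' addrA addrAC.
Qed.

Lemma conj_stab (F : finFieldType) (m : nat) (G : {group {perm 'rV[F]_m}})
  (alpha u x d : 'rV[F]_m) g :
  in_AGL G -> contains_translations G -> g \in G -> g u = u -> g x = d -> d != x ->
  exists2 h, h \in point_stab G alpha :\ 1%g & h (x - u + alpha) = d - u + alpha.
Proof.
move=> HA HT Hg Hgu Hgx Hdx.
have [t1 Ht1 E1] := HT (u - alpha).
have [t2 Ht2 E2] := HT (alpha - u).
have Hh : (t1 * g * t2)%g \in G by rewrite !groupM.
have Ey : forall y, (t1 * g * t2)%g y = g (y + (u - alpha)) + (alpha - u).
  by move=> y; rewrite !permM E1 E2.
have Id1 : forall a b : 'rV[F]_m, a + (b - a) = b.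
  by move=> a b; rewrite addrCA subrr addr0.
have Hx : (t1 * g * t2)%g (x - u + alpha) = d - u + alpha.
  by rewrite Ey -addrA Id1 subrK Hgx addrA addrAC.
exists (t1 * g * t2)%g => //.
rewrite !inE Hh Ey Id1 Hgu Id1 eqxx andbT andbT.
apply/eqP => E1'; move: Hx; rewrite E1' perm1 => /addIr /addIr /eqP.
by rewrite eq_sym (negbTE Hdx).
Qed.

Lemma noniso_witness (F : finFieldType) (m : nat) (G : {group {perm 'rV[F]_m}})
  (Z : {set {set 'rV[F]_m * 'rV[F]_m}}) x :
  is_cc Z -> cc_extends Z (Inv G) -> [set (x,x)] \notin Z ->
  exists2 d, d != x & forall u, [set (u,u)] \in Z -> exists2 g, g \in G & g u = u /\ g x = d.
Proof.
move=> HZ HE Hx.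
have [d Hdx Hd] := cc_L3 HZ Hx.
exists d => // u Hu.
have Hud := cc_L2 HZ Hu Hd.
have [Hb Hux] := cc_blk (u,x) HZ.
have Ho : orbit2 G (u,x) \in Inv G by apply: imset_f; rewrite inE.
have Hux' : (u,x) \in orbit2 G (u,x).
  by apply/imsetP; exists 1%g; rewrite ?group1 // !perm1.
case: (HE _ _ Ho Hb) => [/subsetP Hs|Hdis].
  have := Hs _ Hud => /imsetP[g Hg E]; case: E => E1 E2; exists g => //.
by move: Hdis; rewrite -setI_eq0 => /eqP /setP /(_ (u,x)); rewrite !inE Hux Hux'.
Qed.

Definition Bad (F : finFieldType) (m : nat) (G : {set {perm 'rV[F]_m}}) (alpha beta : 'rV[F]_m)
  : {set 'rV[F]_m} :=
  [set y | [exists h1 in point_stab G alpha :\ 1%g, exists h2 in point_stab G alpha :\ 1%g,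
     ((h2 (y - beta + alpha) == h1 y - beta + alpha)%R && (h1 y != y))]].

Lemma all_iso (F : finFieldType) (m : nat) (G : {group {perm 'rV[F]_m}})
  (alpha beta : 'rV[F]_m) (Z : {set {set 'rV[F]_m * 'rV[F]_m}}) :
  in_AGL G -> contains_translations G ->
  is_cc Z -> cc_extends Z (Inv G) -> [set (alpha,alpha)] \in Z -> [set (beta,beta)] \in Z ->
  (FixK (point_stab G alpha) + #|Bad G alpha beta| < #|[set: 'rV[F]_m]|)%N ->
  forall x, [set (x,x)] \in Z.
Proof.
move=> HA HT HZ HE Ha Hb Hlt x0; apply/negPn/negP => Hx0.
set iso := [set u | [set (u,u)] \in Z].
set J := point_stab G alpha :\ 1%g.
have Hiso : (#|iso| <= FixK (point_stab G alpha))%N.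
  have [d Hdx Hd] := noniso_witness HZ HE Hx0.
  apply: (leq_trans (union_bound (J := J)
           (P := fun h u => (h (x0 - u + alpha) == d - u + alpha)%R) _)).
    move=> u; rewrite inE => /Hd [g Hg [Hgu Hgx]].
    have [h Hh E] := conj_stab alpha HA HT Hg Hgu Hgx Hdx.
    by exists h => //; rewrite E.
  apply: leq_sum => h; rewrite !inE => /andP[_ /andP[HhG /eqP Hha]].
  exact: count_fix HA HhG Hha.
have Hbad : ~: iso \subset Bad G alpha beta.
  apply/subsetP => y; rewrite !inE => Hy.
  have [d Hdy Hd] := noniso_witness HZ HE Hy.
  have [g1 Hg1 [Hg1a Hg1y]] := Hd _ Ha.
  have [g2 Hg2 [Hg2b Hg2y]] := Hd _ Hb.
  have [h2 Hh2 E2] := conj_stab alpha HA HT Hg2 Hg2b Hg2y Hdy.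
  apply/existsP; exists g1; apply/andP; split.
    rewrite !inE Hg1 Hg1a eqxx !andbT; apply/eqP => E1; move: Hdy.
    by rewrite -Hg1y E1 perm1 eqxx.
  apply/existsP; exists h2; rewrite Hh2 /= E2 Hg1y eqxx /=.
  exact: Hdy.
have := cardsC iso; have := subset_leq_card Hbad.
move: Hlt; rewrite cardsT => Hlt H1 H2.
have : (#|'rV[F]_m| <= FixK (point_stab G alpha) + #|Bad G alpha beta|)%N.
  by rewrite -H2 leq_add.
by rewrite leqNgt Hlt.
Qed.

Lemma bad_sum (F : finFieldType) (m : nat) (G : {group {perm 'rV[F]_m}}) (alpha : 'rV[F]_m) :
  in_AGL G ->
  (\sum_beta #|Bad G alpha beta| <=
    #|[set: 'rV[F]_m]| * (#|point_stab G alpha :\ 1%g| * FixK (point_stab G alpha)))%N.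
Proof.
move=> HA.
set J := point_stab G alpha :\ 1%g.
pose E (h1 h2 : {perm 'rV[F]_m}) (beta y : 'rV[F]_m) := (h2 (y - beta + alpha) == h1 y - beta + alpha)%R.
have H1 : forall beta, (#|Bad G alpha beta| <= \sum_(h1 in J) \sum_(h2 in J) #|[set y | E h1 h2 beta y]|)%N.
  move=> beta.
  apply: (leq_trans (union_bound (J := J)
           (P := fun h1 y => [exists h2 in J, E h1 h2 beta y]) _)).
    move=> y; rewrite inE => /existsP[h1 /andP[Hh1 /existsP[h2 /andP[Hh2 /andP[He _]]]]].
    by exists h1 => //; apply/existsP; exists h2; rewrite Hh2.
  apply: leq_sum => h1 _; apply: union_bound => y; rewrite inE => /existsP[h2 /andP[Hh2 He]].
  by exists h2.
apply: (@leq_trans (\sum_beta \sum_(h1 in J) \sum_(h2 in J) #|[set y | E h1 h2 beta y]|)); first by apply: leq_sum => beta _; apply: H1.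
rewrite exchange_big /=.
have H2 : forall h1 h2, h2 \in J -> (\sum_beta #|[set y | E h1 h2 beta y]| <= #|[set: 'rV[F]_m]| * fixn h2)%N.
  move=> h1 h2; rewrite !inE => /andP[_ /andP[HhG /eqP Hha]].
  under eq_bigr => beta _ do rewrite (card_sumb (E h1 h2 beta)).
  rewrite exchange_big /=.
  apply: (@leq_trans (\sum_(y : 'rV[F]_m) fixn h2)).
    apply: leq_sum => y _; rewrite -card_sumb.
    exact: count_fix HA HhG Hha.
  rewrite (eq_bigl (fun y => y \in [set: 'rV[F]_m])); last by move=> y; rewrite inE.
  by rewrite sum_nat_const.
apply: (@leq_trans (\sum_(h1 in J) \sum_(h2 in J) #|[set: 'rV[F]_m]| * fixn h2)).
  apply: leq_sum => h1 _; rewrite exchange_big /=.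
  by apply: leq_sum => h2 Hh2; apply: H2.
rewrite sum_nat_const; under eq_bigr => h _ do rewrite mulnC.
rewrite mulnC /FixK -big_distrl /=; apply: eq_leq; rewrite mulnC mulnA [LHS]mulnC; done.
Qed.

From mathcomp Require Import zify.

Theorem corollary8p2 (F : finFieldType) (m : nat) (G : {group {perm 'rV[F]_m}})
  (alpha : 'rV[F]_m) :
  in_AGL G -> contains_translations G ->
  let K := point_stab G alpha in
  let n := #|[set: 'rV[F]_m]| in
  let k := #|K| in
  ((4 * (k - 1) * FixK K < n)%N -> base_number_le (Inv G) 2) /\
  ((4 * k * (k - 1) * fixK K < n)%N -> base_number_le (Inv G) 2).
Proof.
move=> HA HT K n k.
have Hk1 : #|K :\ 1%g| = (k - 1)%N.
  have := cardsD1 1%g K; rewrite /k !inE group1 perm1 eqxx /= => ->; by rewrite add1n subn1.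
have Hn : (0 < n)%N by rewrite /n cardsT; apply/card_gt0P; exists 0%R.
have HFn : (FixK K <= (k - 1) * n)%N.
  rewrite /FixK -Hk1 -sum_nat_const; apply: leq_sum => g _.
  by rewrite /fixn /n cardsT max_card.
have Hfirst : (4 * (k - 1) * FixK K < n)%N -> base_number_le (Inv G) 2.
  move=> Hlt.
  have [beta Hbeta] : exists beta, (#|Bad G alpha beta| <= (k - 1) * FixK K)%N.
    case: (boolP [exists beta, (#|Bad G alpha beta| <= (k - 1) * FixK K)%N]) => [/existsP//|/existsPn Hall].
    have Hs := bad_sum alpha HA; rewrite -/K Hk1 -/n in Hs.
    have : (\sum_(beta : 'rV[F]_m) ((k - 1) * FixK K).+1 <= \sum_beta #|Bad G alpha beta|)%N.
      by apply: leq_sum => beta _; have := Hall beta; rewrite -ltnNge.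
    rewrite (eq_bigl (fun y => y \in [set: 'rV[F]_m])); last by move=> y; rewrite inE.
    rewrite sum_nat_const -/n => H; exfalso.
    have := leq_trans H Hs; nia.
  exists [set alpha; beta]; split; first by rewrite cards2; case: (alpha != beta).
  exists (Ydisc 'rV[F]_m); split; last by move=> _ /imsetP[p _ ->]; rewrite cards1.
  split.
  - exact: Ydisc_cc.
  - move=> s _ _ /imsetP[p _ ->]; case Hp: (p \in s).
    + by left; rewrite sub1set.
    + by right; rewrite disjoints1 Hp.
  - by move=> b _; apply: imset_f; rewrite inE.
  - move=> Z HZ HEZ Hfib.
    have Hiso := all_iso HA HT HZ HEZ (Hfib _ (set21 _ _)) (Hfib _ (set22 _ _)).
    have Hall : forall x, [set (x,x)] \in Z.
      apply: Hiso; rewrite -/K -/n; nia.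
    move=> s t Hs Ht; move: Hs => /imsetP[p _ ->].
    case Hp: (p \in t).
    + left; apply/subsetP => -[c d] Hcd; rewrite inE.
      case: p Hp => a b Hab.
      have -> := cc_first HZ (Hall a) Ht Hab Hcd.
      by have -> := cc_second HZ (Hall b) Ht Hab Hcd.
    + by right; rewrite disjoint_sym disjoints1 Hp.
split => // Hlt; apply: Hfirst.
have HF : (FixK K <= (k - 1) * fixK K)%N.
  rewrite /FixK -Hk1 -sum_nat_const; apply: leq_sum => g Hg.
  exact: leq_bigmax_cond.
nia.
Qed.
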